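(* Let $X_1$ and $X_2$ be two elliptic ovoids of $Q_0$ which are tangent, and let $x\in X_1\setminus X_2$. Then there exists a unique elliptic ovoid of $Q_0$ containing $x$ which is tangent to both $X_1$ and $X_2$.
   Context: Let $q=2^n$ and let $Q_0\cong Q(4,q)$ be the parabolic quadric generalized quadrangle in $\mathrm{PG}(4,q)$. An elliptic ovoid of $Q_0$ is a set $X=S\cap Q_0$ where $S$ is a $3$-dimensional projective subspace meeting $Q_0$ in an elliptic quadric $Q^-(3,q)$. Two distinct elliptic ovoids meet either in exactly one point (then they are called tangent) or in a non-degenerate conic. *)

(* Defs.v *)
From HB Require Import structures.
From mathcomp Require Import all_boot all_order all_algebra all_field.
Set Implicit Arguments. Unset Strict Implicit. Unset Printing Implicit Defensive.
Import GRing.Theory.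
Local Open Scope ring_scope.

Definition crd (F : fieldType) (v : 'rV[F]_5) (i : nat) : F := v 0 (inord i).
Definition crd4 (F : fieldType) (y : 'rV[F]_4) (i : nat) : F := y 0 (inord i).

(* Projective points of PG(4,F) are represented by their canonical
   representative: the nonzero vector whose first nonzero coordinate is 1. *)
Definition normalized (F : fieldType) (v : 'rV[F]_5) : bool :=
  [exists i : 'I_5, (v 0 i == 1) && [forall j : 'I_5, (j < i)%N ==> (v 0 j == 0)]].

Definition Qform (F : fieldType) (v : 'rV[F]_5) : F :=
  crd v 0 ^+ 2 + crd v 1 * crd v 2 + crd v 3 * crd v 4.

Definition Q0 (F : finFieldType) : {set 'rV[F]_5} :=
  [set v | normalized v && (Qform v == 0)].

(* X is an elliptic ovoid of Q_0: X = S ∩ Q_0, where S is a solid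
   (3-dimensional projective subspace), given as the row space of a 4x5
   matrix phi of rank 4, such that the restriction of Q to S is, in the
   coordinates given by phi, the canonical elliptic form
   y0 y1 + y2^2 + y2 y3 + d y3^2 with t^2 + t + d irreducible over F,
   i.e. S ∩ Q_0 is an elliptic quadric Q^-(3,q). *)
Definition elliptic_ovoid (F : finFieldType) (X : {set 'rV[F]_5}) : Prop :=
  exists (phi : 'M[F]_(4, 5)) (d : F),
    [/\ \rank phi = 4%N,
        (forall t : F, t ^+ 2 + t + d != 0),
        (forall y : 'rV[F]_4,
            Qform (y *m phi) =
              crd4 y 0 * crd4 y 1 + crd4 y 2 ^+ 2 + crd4 y 2 * crd4 y 3
              + d * crd4 y 3 ^+ 2)
      & X = [set v in Q0 F | (v <= phi)%MS]].

Definition tangent (F : finFieldType) (X Y : {set 'rV[F]_5}) : Prop :=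
  #|X :&: Y| = 1%N.

(* Main.v *)
Require Import Defs.
From HB Require Import structures.
From mathcomp Require Import all_boot all_order all_algebra all_field.
From mathcomp Require Import ring.
Import GRing.Theory.
Local Open Scope ring_scope.
Set Implicit Arguments. Unset Strict Implicit.

Lemma crdD (F : fieldType) (u v : 'rV[F]_5) i : crd (u + v) i = crd u i + crd v i.
Proof. by rewrite /crd mxE. Qed.
Lemma crdB (F : fieldType) (u v : 'rV[F]_5) i : crd (u - v) i = crd u i - crd v i.
Proof. by rewrite /crd !mxE. Qed.
Lemma crdZ (F : fieldType) (a : F) (u : 'rV[F]_5) i : crd (a *: u) i = a * crd u i.
Proof. by rewrite /crd mxE. Qed.
Lemma crd0 (F : fieldType) i : crd (0 : 'rV[F]_5) i = 0.
Proof. by rewrite /crd mxE. Qed.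
Lemma crd4D (F : fieldType) (u v : 'rV[F]_4) i : crd4 (u + v) i = crd4 u i + crd4 v i.
Proof. by rewrite /crd4 mxE. Qed.
Lemma crd4Z (F : fieldType) (a : F) (u : 'rV[F]_4) i : crd4 (a *: u) i = a * crd4 u i.
Proof. by rewrite /crd4 mxE. Qed.

Lemma row5P (F : fieldType) (u v : 'rV[F]_5) :
  crd u 0 = crd v 0 -> crd u 1 = crd v 1 -> crd u 2 = crd v 2 ->
  crd u 3 = crd v 3 -> crd u 4 = crd v 4 -> u = v.
Proof.
move=> h0 h1 h2 h3 h4; apply/rowP => j.
have E : forall w : 'rV[F]_5, w 0 j = crd w j by move=> w; rewrite /crd inord_val.
rewrite !E {E}; case: j => [[|[|[|[|[|k]]]]] Hk] //=.
Qed.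

Lemma row4P (F : fieldType) (u v : 'rV[F]_4) :
  crd4 u 0 = crd4 v 0 -> crd4 u 1 = crd4 v 1 -> crd4 u 2 = crd4 v 2 ->
  crd4 u 3 = crd4 v 3 -> u = v.
Proof.
move=> h0 h1 h2 h3; apply/rowP => j.
have E : forall w : 'rV[F]_4, w 0 j = crd4 w j by move=> w; rewrite /crd4 inord_val.
rewrite !E {E}; case: j => [[|[|[|[|k]]]] Hk] //=.
Qed.

Definition dot (F : fieldType) (u v : 'rV[F]_5) : F := \sum_(i < 5) u 0 i * v 0 i.

Lemma dot_crd (F : fieldType) (u v : 'rV[F]_5) : dot u v =
  crd u 0 * crd v 0 + crd u 1 * crd v 1 + crd u 2 * crd v 2 + crd u 3 * crd v 3
  + crd u 4 * crd v 4.
Proof.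
have E : forall (w : 'rV[F]_5) (j : 'I_5), w 0 j = crd w j by move=> w j; rewrite /crd inord_val.
rewrite /dot !big_ord_recl big_ord0 !E /=; ring.
Qed.

Definition unitv (F : fieldType) (k : nat) : 'rV[F]_5 := delta_mx 0 (inord k).
Lemma crd_unitv (F : fieldType) k i : (k < 5)%N -> (i < 5)%N ->
  crd (unitv F k) i = (i == k)%:R.
Proof.
move=> hk hi; rewrite /crd /unitv mxE eqxx /=.
by rewrite -val_eqE /= !inordK.
Qed.
Definition unitv4 (F : fieldType) (k : nat) : 'rV[F]_4 := delta_mx 0 (inord k).
Lemma crd4_unitv (F : fieldType) k i : (k < 4)%N -> (i < 4)%N ->
  crd4 (unitv4 F k) i = (i == k)%:R.
Proof.
move=> hk hi; rewrite /crd4 /unitv4 mxE eqxx /=.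
by rewrite -val_eqE /= !inordK.
Qed.

Definition Bq (F : fieldType) (u v : 'rV[F]_5) : F :=
  crd u 1 * crd v 2 + crd u 2 * crd v 1 + crd u 3 * crd v 4 + crd u 4 * crd v 3.

Definition G4 (F : fieldType) (d : F) (y : 'rV[F]_4) : F :=
  crd4 y 0 * crd4 y 1 + crd4 y 2 ^+ 2 + crd4 y 2 * crd4 y 3 + d * crd4 y 3 ^+ 2.

Section Char2.
End Char2.

Lemma QD (F : fieldType) (h2 : 2%:R = 0 :> F) (u v : 'rV[F]_5) :
  Qform (u + v) = Qform u + Qform v + Bq u v.
Proof. rewrite /Qform /Bq !crdD. ring: h2. Qed.
Lemma QZ (F : fieldType) (a : F) (u : 'rV[F]_5) : Qform (a *: u) = a ^+ 2 * Qform u.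
Proof. rewrite /Qform !crdZ. ring. Qed.
Lemma QN (F : fieldType) (u : 'rV[F]_5) : Qform (- u) = Qform u.
Proof. rewrite -scaleN1r QZ; ring. Qed.
Lemma BqC (F : fieldType) (u v : 'rV[F]_5) : Bq u v = Bq v u.
Proof. rewrite /Bq; ring. Qed.
Lemma BqDl (F : fieldType) (u v w : 'rV[F]_5) : Bq (u + v) w = Bq u w + Bq v w.
Proof. rewrite /Bq !crdD; ring. Qed.
Lemma BqBl (F : fieldType) (u v w : 'rV[F]_5) : Bq (u - v) w = Bq u w - Bq v w.
Proof. rewrite /Bq !crdB; ring. Qed.
Lemma BqZl (F : fieldType) a (u w : 'rV[F]_5) : Bq (a *: u) w = a * Bq u w.
Proof. rewrite /Bq !crdZ; ring. Qed.
Lemma BqDr (F : fieldType) (u v w : 'rV[F]_5) : Bq w (u + v) = Bq w u + Bq w v.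
Proof. rewrite /Bq !crdD; ring. Qed.
Lemma BqBr (F : fieldType) (u v w : 'rV[F]_5) : Bq w (u - v) = Bq w u - Bq w v.
Proof. rewrite /Bq !crdB; ring. Qed.
Lemma BqZr (F : fieldType) a (u w : 'rV[F]_5) : Bq w (a *: u) = a * Bq w u.
Proof. rewrite /Bq !crdZ; ring. Qed.
Lemma Bqvv (F : fieldType) (h2 : 2%:R = 0 :> F) (u : 'rV[F]_5) : Bq u u = 0.
Proof. rewrite /Bq. ring: h2. Qed.
Lemma dotDr (F : fieldType) (h u v : 'rV[F]_5) : dot h (u + v) = dot h u + dot h v.
Proof. rewrite !dot_crd !crdD; ring. Qed.
Lemma dotBr (F : fieldType) (h u v : 'rV[F]_5) : dot h (u - v) = dot h u - dot h v.
Proof. rewrite !dot_crd !crdB; ring. Qed.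
Lemma dotZr (F : fieldType) a (h u : 'rV[F]_5) : dot h (a *: u) = a * dot h u.
Proof. rewrite !dot_crd !crdZ; ring. Qed.
Lemma dotDl (F : fieldType) (h u v : 'rV[F]_5) : dot (u + v) h = dot u h + dot v h.
Proof. rewrite !dot_crd !crdD; ring. Qed.
Lemma dotBl (F : fieldType) (h u v : 'rV[F]_5) : dot (u - v) h = dot u h - dot v h.
Proof. rewrite !dot_crd !crdB; ring. Qed.
Lemma dotZl (F : fieldType) a (h u : 'rV[F]_5) : dot (a *: u) h = a * dot u h.
Proof. rewrite !dot_crd !crdZ; ring. Qed.

Lemma norm_neq0 (F : fieldType) (v : 'rV[F]_5) : normalized v -> v != 0.
Proof.
case/existsP=> i /andP[/eqP h _]; apply/eqP=> v0; move: h; rewrite v0 mxE => /eqP.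
by rewrite eq_sym oner_eq0.
Qed.

Lemma norm_uniq (F : fieldType) (v w : 'rV[F]_5) c :
  normalized v -> normalized w -> v = c *: w -> v = w.
Proof.
case/existsP=> i /andP[/eqP vi /forallP vlt]; case/existsP=> k /andP[/eqP wk /forallP wlt] hv.
have E : forall j, v 0 j = c * w 0 j by move=> j; rewrite hv mxE.
case: (ltngtP i k) => [ik|ki|ik].
- have := implyP (wlt i) ik => /eqP wi.
  by move: vi; rewrite E wi mulr0 => /eqP; rewrite eq_sym oner_eq0.
- have := implyP (vlt k) ki => /eqP vk.
  move: vk; rewrite E wk mulr1 => c0.
  by move: vi; rewrite E c0 mul0r => /eqP; rewrite eq_sym oner_eq0.
- have ik' : i = k by apply: val_inj.
  subst k; move: vi; rewrite E wk mulr1 => c1.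
  by rewrite hv c1 scale1r.
Qed.

Lemma norm_exists (F : fieldType) (v : 'rV[F]_5) : v != 0 ->
  exists c, c != 0 /\ normalized (c *: v).
Proof.
move=> v0.
have ex : exists n, (n < 5)%N && (v 0 (inord n) != 0).
  case: (pickP (fun j : 'I_5 => v 0 j != 0)) => [j hj|h0].
    by exists j; rewrite ltn_ord inord_val hj.
  case/eqP: v0; apply/rowP=> j; rewrite mxE.
  by move: (h0 j) => /= /negbFE /eqP.
case: (ex_minnP ex) => m /andP[hm vm] hmin.
exists (v 0 (inord m))^-1; split; first by rewrite invr_eq0.
apply/existsP; exists (inord m); rewrite mxE mulVf // eqxx /=.
apply/forallP=> j; apply/implyP; rewrite inordK // => jm.
rewrite mxE; apply/eqP; case: (eqVneq (v 0 j) 0) => [->|vj]; first by rewrite mulr0.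
have := hmin j; rewrite ltn_ord inord_val vj => /(_ isT).
by rewrite leqNgt jm.
Qed.

Lemma mx11_eq0 (F : fieldType) (M : 'M[F]_1) : (M == 0) = (M 0 0 == 0).
Proof.
apply/eqP/eqP => [->|h]; first by rewrite mxE.
by apply/matrixP => i j; rewrite !ord1 h mxE.
Qed.

Lemma solid_func (F : fieldType) (phi : 'M[F]_(4,5)) : \rank phi = 4%N ->
  exists h : 'rV[F]_5, h != 0 /\ forall v : 'rV[F]_5, (v <= phi)%MS = (dot h v == 0).
Proof.
move=> rk.
set K := cokermx phi.
have rK : \rank K = 1%N by rewrite mxrank_coker rk.
have [j hj] : exists j, col j K != 0.
  case: (pickP (fun j : 'I_5 => col j K != 0)) => [j hj|h0]; first by exists j.
  exfalso; have K0 : K = 0.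
    apply/matrixP=> i j; have := h0 j => /negbFE/eqP /matrixP /(_ i 0).
    by rewrite !mxE.
  by move: rK; rewrite K0 mxrank0.
set hc := col j K.
have phc : phi *m hc = 0 by rewrite /hc colE mulmxA mulmx_coker mul0mx.
have rhc : \rank hc = 1%N.
  by apply/eqP; rewrite eqn_leq rank_leq_col lt0n mxrank_eq0 hj.
have rker : \rank (kermx hc) = 4%N by rewrite mxrank_ker rhc.
have sub : (phi <= kermx hc)%MS by rewrite sub_kermx phc.
have eqm : (phi == kermx hc)%MS by rewrite -(mxrank_leqif_eq sub).2 rk rker.
exists hc^T; split; first by rewrite trmx_eq0.
move=> v; rewrite (eqmxP eqm) sub_kermx mx11_eq0 mxE /dot.
congr (_ == 0); apply: eq_bigr => i _; by rewrite !mxE mulrC.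
Qed.

Lemma aniso (F : fieldType) (d : F) (hd : forall t : F, t ^+ 2 + t + d != 0) a b :
  a ^+ 2 + a * b + d * b ^+ 2 = 0 -> a = 0 /\ b = 0.
Proof.
move=> h; case: (eqVneq b 0) => [b0|bn0].
  subst b; split=> //; move: h; rewrite mulr0 expr0n /= mulr0 !addr0 => /eqP.
  by rewrite expf_eq0 /= => /eqP.
exfalso; move: (hd (a / b)).
have -> : (a / b) ^+ 2 + a / b + d = (a ^+ 2 + a * b + d * b ^+ 2) / b ^+ 2.
  by field.
by rewrite h mul0r eqxx.
Qed.

Lemma scal2 (F : fieldType) (h2 : 2%:R = 0 :> F) (d : F)
  (hd : forall t : F, t ^+ 2 + t + d != 0) u0 u1 u2 u3 w0 w1 w2 w3 :
  u0 * u1 + u2 ^+ 2 + u2 * u3 + d * u3 ^+ 2 = 0 ->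
  w0 * w1 + w2 ^+ 2 + w2 * w3 + d * w3 ^+ 2 = 0 ->
  u0 * w1 + u1 * w0 + u2 * w3 + u3 * w2 = 0 ->
  ~~ [&& w0 == 0, w1 == 0, w2 == 0 & w3 == 0] ->
  exists c, [/\ u0 = c * w0, u1 = c * w1, u2 = c * w2 & u3 = c * w3].
Proof.
move=> Gu Gw B nz.
case: (eqVneq w0 0) => [w00|w0n].
  subst w0.
  have [w20 w30] : w2 = 0 /\ w3 = 0.
    by apply: (aniso hd); move: Gw; rewrite mul0r add0r.
  subst w2 w3.
  have w1n : w1 != 0 by move: nz; rewrite !eqxx /= andbT.
  have u00 : u0 = 0.
    by move: B; rewrite !mulr0 !addr0 => /eqP; rewrite mulf_eq0 (negbTE w1n) orbF => /eqP.
  subst u0.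
  have [u20 u30] : u2 = 0 /\ u3 = 0.
    by apply: (aniso hd); move: Gu; rewrite mul0r add0r.
  subst u2 u3.
  by exists (u1 / w1); split; rewrite ?mulr0 ?divfK.
set c := u0 / w0.
have hu0 : u0 - c * w0 = 0 by rewrite divfK ?subrr.
set z2 := u2 - c * w2; set z3 := u3 - c * w3.
have hz : z2 ^+ 2 + z2 * z3 + d * z3 ^+ 2 = 0.
  have -> : z2 ^+ 2 + z2 * z3 + d * z3 ^+ 2 =
    (u0 * u1 + u2 ^+ 2 + u2 * u3 + d * u3 ^+ 2)
    + c ^+ 2 * (w0 * w1 + w2 ^+ 2 + w2 * w3 + d * w3 ^+ 2)
    - c * (u0 * w1 + u1 * w0 + u2 * w3 + u3 * w2)
    - 2%:R * (c * u2 * w2 + d * c * u3 * w3)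
    - u1 * (u0 - c * w0) + c * w1 * (u0 - c * w0).
    by rewrite /z2 /z3; ring.
  by rewrite Gu Gw B h2 hu0; ring.
have [z20 z30] := aniso hd hz.
have hz1 : w0 * (u1 - c * w1) = 0.
  have -> : w0 * (u1 - c * w1) =
    (u0 * w1 + u1 * w0 + u2 * w3 + u3 * w2)
    - 2%:R * c * (w0 * w1 + w2 * w3) - w1 * (u0 - c * w0) - w2 * z3 - w3 * z2.
    by rewrite /z2 /z3; ring.
  by rewrite B h2 hu0 z20 z30; ring.
move: hz1 => /eqP; rewrite mulf_eq0 (negbTE w0n) /= subr_eq0 => /eqP z10.
exists c; split=> //.
- by apply/eqP; rewrite -subr_eq0 hu0.
- by apply/eqP; rewrite -subr_eq0 -/z2 z20.
- by apply/eqP; rewrite -subr_eq0 -/z3 z30.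
Qed.

Definition canon (F : fieldType) (phi : 'M[F]_(4,5)) (d : F) :=
  forall y : 'rV[F]_4, Qform (y *m phi) =
    crd4 y 0 * crd4 y 1 + crd4 y 2 ^+ 2 + crd4 y 2 * crd4 y 3 + d * crd4 y 3 ^+ 2.

Lemma crdN0 (F : fieldType) : [/\ crd (unitv F 0) 0 = 1, crd (unitv F 0) 1 = 0,
  crd (unitv F 0) 2 = 0, crd (unitv F 0) 3 = 0 & crd (unitv F 0) 4 = 0].
Proof. by rewrite !crd_unitv. Qed.

Lemma QN0 (F : fieldType) : Qform (unitv F 0) = 1.
Proof. have [a b c e f] := crdN0 F; rewrite /Qform a b c e f; ring. Qed.
Lemma BqN0 (F : fieldType) (v : 'rV[F]_5) : Bq v (unitv F 0) = 0.
Proof. have [a b c e f] := crdN0 F; rewrite /Bq b c e f; ring. Qed.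

Lemma nucleus_notin (F : fieldType) (h2 : 2%:R = 0 :> F) phi d :
  canon phi d -> ~~ (unitv F 0 <= phi)%MS.
Proof.
move=> hG; apply/negP => /submxP [y0 hy0].
have key : forall y, crd4 y 0 * crd4 y0 1 + crd4 y 1 * crd4 y0 0
    + crd4 y 2 * crd4 y0 3 + crd4 y 3 * crd4 y0 2 = 0.
  move=> y.
  have e1 := hG (y + y0); rewrite mulmxDl -hy0 QD // QN0 BqN0 hG !crd4D in e1.
  have e2 := hG y0; rewrite -hy0 QN0 in e2.
  have : crd4 y 0 * crd4 y0 1 + crd4 y 1 * crd4 y0 0
    + crd4 y 2 * crd4 y0 3 + crd4 y 3 * crd4 y0 2 =
    ((crd4 y 0 + crd4 y0 0) * (crd4 y 1 + crd4 y0 1) + (crd4 y 2 + crd4 y0 2) ^+ 2 +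
     (crd4 y 2 + crd4 y0 2) * (crd4 y 3 + crd4 y0 3) + d * (crd4 y 3 + crd4 y0 3) ^+ 2)
    - (crd4 y 0 * crd4 y 1 + crd4 y 2 ^+ 2 + crd4 y 2 * crd4 y 3 + d * crd4 y 3 ^+ 2)
    - (crd4 y0 0 * crd4 y0 1 + crd4 y0 2 ^+ 2 + crd4 y0 2 * crd4 y0 3 + d * crd4 y0 3 ^+ 2)
    - 2%:R * (crd4 y 2 * crd4 y0 2 + d * crd4 y 3 * crd4 y0 3).
    by ring.
  by move=> ->; rewrite -e1 -e2 h2; ring.
have k0 := key (unitv4 F 0); have k1 := key (unitv4 F 1).
have k2 := key (unitv4 F 2); have k3 := key (unitv4 F 3).
rewrite !crd4_unitv //= in k0 k1 k2 k3.
have e2 := hG y0; rewrite -hy0 QN0 in e2.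
move: e2; have -> : crd4 y0 1 = 0 by move: k0; rewrite !mul1r !mul0r !addr0.
have -> : crd4 y0 0 = 0 by move: k1; rewrite !mul1r !mul0r !add0r !addr0.
have -> : crd4 y0 3 = 0 by move: k2; rewrite !mul1r !mul0r !add0r !addr0.
have -> : crd4 y0 2 = 0 by move: k3; rewrite !mul1r !mul0r !add0r.
rewrite !mul0r expr0n /= !mulr0 !addr0 => /eqP; by rewrite oner_eq0.
Qed.

Lemma ovoid_F1 (F : fieldType) (h2 : 2%:R = 0 :> F) phi d
  (hd : forall t : F, t ^+ 2 + t + d != 0) : canon phi d ->
  forall v w : 'rV[F]_5, (v <= phi)%MS -> (w <= phi)%MS -> Qform v = 0 ->
  Qform w = 0 -> Bq v w = 0 -> w != 0 -> exists c, v = c *: w.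
Proof.
move=> hG v w /submxP [u hu] /submxP [u' hu'] Qv Qw B wn.
have Gu := hG u; rewrite -hu Qv in Gu.
have Gw := hG u'; rewrite -hu' Qw in Gw.
have Buw : crd4 u 0 * crd4 u' 1 + crd4 u 1 * crd4 u' 0
    + crd4 u 2 * crd4 u' 3 + crd4 u 3 * crd4 u' 2 = 0.
  have e1 := hG (u + u'); rewrite mulmxDl -hu -hu' QD // Qv Qw B !crd4D in e1.
  have : crd4 u 0 * crd4 u' 1 + crd4 u 1 * crd4 u' 0
    + crd4 u 2 * crd4 u' 3 + crd4 u 3 * crd4 u' 2 =
    ((crd4 u 0 + crd4 u' 0) * (crd4 u 1 + crd4 u' 1) + (crd4 u 2 + crd4 u' 2) ^+ 2 +
     (crd4 u 2 + crd4 u' 2) * (crd4 u 3 + crd4 u' 3) + d * (crd4 u 3 + crd4 u' 3) ^+ 2)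
    - (crd4 u 0 * crd4 u 1 + crd4 u 2 ^+ 2 + crd4 u 2 * crd4 u 3 + d * crd4 u 3 ^+ 2)
    - (crd4 u' 0 * crd4 u' 1 + crd4 u' 2 ^+ 2 + crd4 u' 2 * crd4 u' 3 + d * crd4 u' 3 ^+ 2)
    - 2%:R * (crd4 u 2 * crd4 u' 2 + d * crd4 u 3 * crd4 u' 3).
    by ring.
  by move=> ->; rewrite -e1 -Gu -Gw h2; ring.
have nz : ~~ [&& crd4 u' 0 == 0, crd4 u' 1 == 0, crd4 u' 2 == 0 & crd4 u' 3 == 0].
  apply/negP => /and4P [/eqP a /eqP b /eqP c /eqP e].
  have u'0 : u' = 0 by apply: row4P; rewrite ?a ?b ?c ?e /crd4 mxE.
  by move: wn; rewrite hu' u'0 mul0mx eqxx.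
have [c [c0 c1 c2 c3]] := scal2 h2 hd (esym Gu) (esym Gw) Buw nz.
exists c; rewrite hu hu' scalemxAl; congr (_ *m _).
by apply: row4P; rewrite crd4Z.
Qed.

Definition ovo (F : finFieldType) (X : {set 'rV[F]_5}) (h : 'rV[F]_5) :=
  [/\ crd h 0 = 1,
      forall v, (v \in X) = (v \in Q0 F) && (dot h v == 0)
    & forall v w, v \in X -> w \in X -> Bq v w = 0 -> v = w].

Lemma dot_N0 (F : fieldType) (h : 'rV[F]_5) : dot h (unitv F 0) = crd h 0.
Proof. have [a b c e f] := crdN0 F; rewrite dot_crd a b c e f; ring. Qed.

Lemma phi_data (F : fieldType) (h2 : 2%:R = 0 :> F) (phi : 'M[F]_(4,5)) (d : F) :
  \rank phi = 4%N -> canon phi d ->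
  exists h, crd h 0 = 1 /\ forall v, (v <= phi)%MS = (dot h v == 0).
Proof.
move=> rk hG.
have [h0 [h0n hc]] := solid_func rk.
have nN := nucleus_notin h2 hG.
rewrite hc dot_N0 in nN.
exists ((crd h0 0)^-1 *: h0); split; first by rewrite crdZ mulVf.
by move=> v; rewrite hc dotZl mulf_eq0 invr_eq0 (negbTE nN).
Qed.

Lemma QinE (F : finFieldType) (v : 'rV[F]_5) :
  (v \in Q0 F) = normalized v && (Qform v == 0).
Proof. by rewrite inE. Qed.

Lemma ovoid_ovo (F : finFieldType) (h2 : 2%:R = 0 :> F) (X : {set 'rV[F]_5}) :
  elliptic_ovoid X -> exists h, ovo X h.
Proof.
case=> phi [d [rk hd hG ->]].
have [h [h1 hc]] := phi_data h2 rk hG.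
exists h; split=> //.
  by move=> v; rewrite inE hc.
move=> v w; rewrite !inE => /andP[/andP[nv /eqP Qv] sv] /andP[/andP[nw /eqP Qw] sw] B.
have [c hvc] := ovoid_F1 h2 hd hG sv sw Qv Qw B (norm_neq0 nw).
exact: norm_uniq nv nw hvc.
Qed.

Lemma QB (F : fieldType) (h2 : 2%:R = 0 :> F) (u v : 'rV[F]_5) :
  Qform (u - v) = Qform u + Qform v - Bq u v.
Proof. rewrite QD // QN -scaleN1r BqZr; ring. Qed.

Lemma dot_delta (F : fieldType) (u : 'rV[F]_5) j : dot u (delta_mx 0 j) = u 0 j.
Proof.
rewrite /dot (bigD1 j) //= big1 ?addr0; first by rewrite mxE !eqxx mulr1.
by move=> i hij; rewrite mxE (negbTE hij) andbF mulr0.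
Qed.

Definition Jv (F : fieldType) (r : 'rV[F]_5) : 'rV[F]_5 := \row_j Bq r (delta_mx 0 j).

Lemma dotJ (F : fieldType) (r v : 'rV[F]_5) : dot (Jv r) v = Bq r v.
Proof.
have E : forall i, crd (Jv r) i = Bq r (unitv F i) by move=> i; rewrite /crd mxE.
rewrite dot_crd !E /Bq !crd_unitv //=; ring.
Qed.

Lemma Bq_nondeg (F : fieldType) (r h : 'rV[F]_5) : crd h 0 = 1 -> dot h r = 0 ->
  (forall v, Bq r v = 0) -> r = 0.
Proof.
move=> h0 hr hB.
have e1 := hB (unitv F 1); have e2 := hB (unitv F 2).
have e3 := hB (unitv F 3); have e4 := hB (unitv F 4).
rewrite /Bq !crd_unitv //= in e1 e2 e3 e4.
have r2 : crd r 2 = 0 by move: e1; rewrite !(mulr0, mulr1, addr0, add0r).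
have r1 : crd r 1 = 0 by move: e2; rewrite !(mulr0, mulr1, addr0, add0r).
have r4 : crd r 4 = 0 by move: e3; rewrite !(mulr0, mulr1, addr0, add0r).
have r3 : crd r 3 = 0 by move: e4; rewrite !(mulr0, mulr1, addr0, add0r).
have r0 : crd r 0 = 0 by move: hr; rewrite dot_crd h0 r1 r2 r3 r4 !mulr0 !addr0 mul1r.
by apply: row5P; rewrite crd0.
Qed.

Lemma tangent_rel (F : finFieldType) (h2 : 2%:R = 0 :> F)
  (Xa Xb : {set 'rV[F]_5}) ha hb r :
  crd ha 0 = 1 -> (forall v, (v \in Xa) = (v \in Q0 F) && (dot ha v == 0)) ->
  crd hb 0 = 1 -> (forall v, (v \in Xb) = (v \in Q0 F) && (dot hb v == 0)) ->
  Xa :&: Xb = [set r] ->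
  exists k : F, k != 0 /\ forall v, dot hb v = dot ha v + k * Bq r v.
Proof.
move=> ha0 hXa hb0 hXb hI.
have : r \in Xa :&: Xb by rewrite hI set11.
rewrite inE hXa hXb QinE => /andP[/andP[/andP[nr /eqP Qr] /eqP har] /andP[_ /eqP hbr]].
set N := unitv F 0.
have A : forall v, dot hb v = dot ha v -> Bq r v = 0.
  move=> v hv.
  set v1 := v - dot ha v *: N.
  have a1 : dot ha v1 = 0 by rewrite /v1 dotBr dotZr dot_N0 ha0 mulr1 subrr.
  have b1 : dot hb v1 = 0 by rewrite /v1 dotBr dotZr dot_N0 hb0 mulr1 hv subrr.
  have B1 : Bq r v1 = Bq r v by rewrite /v1 BqBr BqZr BqN0 mulr0 subr0.
  rewrite -B1.
  set u := Qform v1 *: r - Bq r v1 *: v1.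
  have Qu : Qform u = 0.
    by rewrite /u QB // !QZ BqZl BqZr Qr; ring.
  have au : dot ha u = 0 by rewrite /u dotBr !dotZr har a1; ring.
  have bu : dot hb u = 0 by rewrite /u dotBr !dotZr hbr b1; ring.
  have Bu : Bq r u = 0.
    case: (eqVneq u 0) => [->|un].
      by rewrite /Bq !crd0; ring.
    have [c [cn nc]] := norm_exists un.
    have : c *: u \in Xa :&: Xb.
      by rewrite inE hXa hXb QinE nc QZ Qu mulr0 !dotZr au bu mulr0 eqxx.
    rewrite hI inE => /eqP cu.
    have : Bq r (c *: u) = 0 by rewrite cu Bqvv.
    by rewrite BqZr => /eqP; rewrite mulf_eq0 (negbTE cn) /= => /eqP.
  move: Bu; rewrite /u BqBr !BqZr Bqvv // mulr0 sub0r => /eqP.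
  by rewrite oppr_eq0 mulf_eq0 orbb => /eqP.
set g := hb - ha.
have gE : forall v, dot g v = dot hb v - dot ha v by move=> v; rewrite dotBl.
have A' : forall v, dot g v = 0 -> dot (Jv r) v = 0.
  by move=> v; rewrite gE dotJ => /eqP; rewrite subr_eq0 => /eqP /A.
have rn : r != 0 := norm_neq0 nr.
have [i gi] : exists i, g 0 i != 0.
  case: (pickP (fun i : 'I_5 => g 0 i != 0)) => [i hi|h0]; first by exists i.
  exfalso; move/eqP: rn; apply; apply: (Bq_nondeg ha0 har) => v.
  rewrite -dotJ; apply: A'.
  rewrite /dot big1 // => j _; have := h0 j => /= /negbFE /eqP ->; by rewrite mul0r.
set beta := (Jv r) 0 i / g 0 i.
have kE : forall j, (Jv r) 0 j = beta * g 0 j.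
  move=> j.
  have := A' (g 0 i *: delta_mx 0 j - g 0 j *: delta_mx 0 i).
  rewrite !dotBr !dotZr !dot_delta mulrC subrr => /(_ erefl) /eqP.
  rewrite subr_eq0 => /eqP e.
  by apply: (mulfI gi); rewrite e /beta; field.
have kg : Jv r = beta *: g.
  by apply/matrixP => a l; rewrite ord1 kE [RHS]mxE.
have bn : beta != 0.
  apply/eqP => b0; move/eqP: rn; apply; apply: (Bq_nondeg ha0 har) => v.
  by rewrite -dotJ kg b0 scale0r /dot big1 // => j _; rewrite mxE mul0r.
exists beta^-1; split; first by rewrite invr_eq0.
move=> v; rewrite -dotJ kg dotZl mulrA mulVf // mul1r gE; ring.
Qed.

Lemma Bq_kill (F : fieldType) (z : 'rV[F]_5) : (forall v, Bq z v = 0) ->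
  [/\ crd z 1 = 0, crd z 2 = 0, crd z 3 = 0 & crd z 4 = 0].
Proof.
move=> hB.
have e1 := hB (unitv F 1); have e2 := hB (unitv F 2).
have e3 := hB (unitv F 3); have e4 := hB (unitv F 4).
rewrite /Bq !crd_unitv //= in e1 e2 e3 e4.
split.
- by move: e2; rewrite !(mulr0, mulr1, addr0, add0r).
- by move: e1; rewrite !(mulr0, mulr1, addr0, add0r).
- by move: e4; rewrite !(mulr0, mulr1, addr0, add0r).
- by move: e3; rewrite !(mulr0, mulr1, addr0, add0r).
Qed.

Lemma phi_ovo (F : finFieldType) (h2 : 2%:R = 0 :> F) (phi : 'M[F]_(4,5)) (d : F)
  (hd : forall t : F, t ^+ 2 + t + d != 0) (hG : canon phi d) h :
  crd h 0 = 1 -> (forall v, (v <= phi)%MS = (dot h v == 0)) ->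
  ovo [set v in Q0 F | (v <= phi)%MS] h.
Proof.
move=> h1 hc; split=> //.
  by move=> v; rewrite inE hc.
move=> v w; rewrite !inE => /andP[/andP[nv /eqP Qv] sv] /andP[/andP[nw /eqP Qw] sw] B.
have [c hvc] := ovoid_F1 h2 hd hG sv sw Qv Qw B (norm_neq0 nw).
exact: norm_uniq nv nw hvc.
Qed.

Definition Rm (F : fieldType) (W : 'rV[F]_5) : 'M[F]_5 := 1%:M - (Jv W)^T *m W.

Lemma Rv (F : fieldType) (W v : 'rV[F]_5) : v *m Rm W = v - Bq v W *: W.
Proof.
rewrite /Rm mulmxBr mulmx1 mulmxA [v *m _]mx11_scalar mul_scalar_mx.
congr (v - _ *: W); rewrite mxE BqC -dotJ /dot.
by apply: eq_bigr => i _; rewrite !mxE mulrC.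
Qed.

Lemma Qz_lemma (F : fieldType) (h2 : 2%:R = 0 :> F) (x p r : 'rV[F]_5) k m k' :
  Qform x = 0 -> Qform p = 0 -> Qform r = 0 ->
  k * Bq x p - k' * Bq r p = 0 -> m * Bq p x + k' * Bq r x = 0 ->
  Qform (k *: x - m *: p - k' *: r) = k * (m * Bq p x).
Proof.
move=> Qx Qp Qr e1 e2.
rewrite !QB // !QZ Qx Qp Qr !BqBl !BqZl !BqZr.
rewrite [Bq r p]BqC [Bq r x]BqC [Bq p x]BqC in e1 e2 *.
have -> : k ^+ 2 * 0 + m ^+ 2 * 0 - k * (m * Bq x p) + k' ^+ 2 * 0 -
   (k * (k' * Bq x r) - m * (k' * Bq p r)) =
   k * (m * Bq x p) - k * (m * Bq x p + k' * Bq x r) - m * (k * Bq x p - k' * Bq p r).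
  by ring.
by rewrite e1 e2; ring.
Qed.

Lemma sq_id (F : fieldType) (a : F) : a ^+ 2 = a -> a != 0 -> a = 1.
Proof. by move=> h an; apply: (mulfI an); rewrite mulr1 -expr2 h. Qed.

Lemma L1 (R : pzRingType) (a b m : R) : a - m * 0 - b = 0 -> a - b = 0.
Proof. by rewrite mulr0 subr0. Qed.
Lemma L2 (R : pzRingType) (a b k : R) : k * 0 - a - b = 0 -> a + b = 0.
Proof. by rewrite mulr0 sub0r -opprD => /eqP; rewrite oppr_eq0 => /eqP. Qed.

Unset Implicit Arguments.

Lemma subABAB (R : zmodType) (a b : R) : a + b - a - b = 0.
Proof. by rewrite [a + b]addrC addrK subrr. Qed.

Theorem mainTheorem4 (F : finFieldType) (char2 : (2%N \in [pchar F]))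
  (X1 X2 : {set 'rV[F]_5}) (x : 'rV[F]_5) :
  elliptic_ovoid X1 -> elliptic_ovoid X2 -> tangent X1 X2 ->
  x \in X1 -> x \notin X2 ->
  exists! X : {set 'rV[F]_5},
    [/\ elliptic_ovoid X, x \in X, tangent X X1 & tangent X X2].
Proof.
move=> ov1 ov2 tan12 xin xnot.
have h2 : 2%:R = 0 :> F := pcharf0 char2.
have [phi1 [d1 [rk1 hd1 hG1 X1E]]] := ov1.
have [h1 [h10 h1c]] := phi_data h2 rk1 hG1.
have [_ hX1 F1] : ovo X1 h1 by rewrite X1E; exact: phi_ovo.
have [g2 [g20 hX2 F2]] := ovoid_ovo h2 ov2.
have [p hp] : exists p, X1 :&: X2 = [set p] by apply/cards1P; rewrite tan12.
have : p \in X1 :&: X2 by rewrite hp set11.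
rewrite inE => /andP[pX1 pX2].
have := pX1; rewrite hX1 QinE => /andP[/andP[np /eqP Qp] /eqP h1p].
have := pX2; rewrite hX2 => /andP[_ /eqP g2p].
have := xin; rewrite hX1 QinE => /andP[/andP[nx /eqP Qx] /eqP h1x].
have xQ : x \in Q0 F by rewrite QinE nx Qx eqxx.
set t := dot g2 x.
have tn : t != 0 by move: xnot; rewrite hX2 xQ.
set N := unitv F 0.
set W := N - t^-1 *: x.
have g2W : dot g2 W = 0 by rewrite /W dotBr dotZr dot_N0 g20 mulVf ?subrr.
have h1W : dot h1 W = 1 by rewrite /W dotBr dotZr dot_N0 h10 h1x mulr0 subr0.
have QW : Qform W = 1 by rewrite /W QB // QN0 QZ Qx mulr0 BqZr BqC BqN0 mulr0; ring.
have BW : forall v, Bq v W = - (t^-1 * Bq v x).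
  by move=> v; rewrite /W BqBr BqZr BqN0 sub0r.
set R := Rm W.
have RE : forall v, v *m R = v - Bq v W *: W by move=> v; exact: Rv.
have QR : forall v, Qform (v *m R) = Qform v.
  by move=> v; rewrite RE QB // QZ QW BqZr; ring.
have RRv : forall v : 'rV[F]_5, v *m R *m R = v.
  move=> v; rewrite !RE BqBl BqZl Bqvv // mulr0 subr0 -addrA -opprD -scalerDl.
  have -> : Bq v W + Bq v W = 2%:R * Bq v W by ring.
  by rewrite h2 mul0r scale0r subr0.
have RR : R *m R = 1%:M.
  apply/row_matrixP => i; have := RRv (row i 1%:M).
  by rewrite -!row_mul mul1mx.
have [Ru _] := mulmx1_unit RR.
set X := [set v in Q0 F | (v <= phi1 *m R)%MS].
have subR : forall v : 'rV[F]_5, (v <= phi1 *m R)%MS = (v *m R <= phi1)%MS.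
  move=> v; apply/idP/idP => H.
    by have := submxMr R H; rewrite -mulmxA RR mulmx1.
  by have := submxMr R H; rewrite RRv.
set hX := h1 + t^-1 *: Jv x.
have hXE : forall v, dot hX v = dot h1 v + t^-1 * Bq x v.
  by move=> v; rewrite /hX dotDl dotZl dotJ.
have memX : forall v, (v \in X) = (v \in Q0 F) && (dot hX v == 0).
  move=> v; rewrite inE subR h1c RE dotBr dotZr h1W mulr1 BW hXE BqC.
  by rewrite opprK.
have ovX : elliptic_ovoid X.
  exists (phi1 *m R), d1; split=> //.
    by rewrite mxrankMfree // row_free_unit.
  by move=> y; rewrite mulmxA QR hG1.
exists X; split.
  split=> //.
  - by rewrite memX xQ hXE h1x Bqvv // mulr0 addr0 eqxx.
  - rewrite /tangent; have -> : X :&: X1 = [set x]; last by rewrite cards1.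
    apply/setP => v; rewrite inE memX hX1 in_set1.
    apply/idP/eqP => [|->]; last by rewrite xQ hXE h1x Bqvv // mulr0 addr0 eqxx.
    case/andP=> /andP[vQ /eqP hXv] /andP[_ /eqP h1v].
    have vX1 : v \in X1 by rewrite hX1 vQ h1v eqxx.
    apply: F1 => //.
    move: hXv; rewrite hXE h1v add0r => /eqP; rewrite mulf_eq0 invr_eq0 (negbTE tn) /=.
    by rewrite BqC => /eqP.
  - set pr := p *m R.
    have prn : pr != 0.
      apply/eqP => pr0; move: (norm_neq0 np); rewrite -(RRv p) -/pr pr0 mul0mx eqxx //.
    have [c [cn nn]] := norm_exists prn.
    set n := c *: pr.
    have Xn : forall v, v \in X :&: X2 -> v = n.
      move=> v; rewrite inE memX hX2 => /andP[/andP[vQ hXv] /andP[_ /eqP g2v]].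
      have vX : v \in X by rewrite memX vQ hXv.
      have := vX; rewrite inE subR => /andP[_ sv].
      set vR := v *m R.
      have vRn : vR != 0.
        apply/eqP => vR0; have := vQ; rewrite QinE => /andP[/norm_neq0 + _].
        by rewrite -(RRv v) -/vR vR0 mul0mx eqxx.
      have [c' [cn' nc']] := norm_exists vRn.
      have : c' *: vR \in X1 :&: X2.
        rewrite inE hX1 hX2 QinE nc' QZ /vR QR.
        have := vQ; rewrite QinE => /andP[_ /eqP ->]; rewrite mulr0 eqxx /=.
        have h1vR : dot h1 vR = 0 by apply/eqP; rewrite -h1c.
        have g2vR : dot g2 vR = 0 by rewrite /vR RE dotBr dotZr g2W mulr0 subr0 g2v.
        by rewrite !dotZr h1vR g2vR mulr0 eqxx.
      rewrite hp in_set1 => /eqP hc'.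
      have ev : v = (c'^-1 / c) *: n.
        by rewrite /n scalerA mulfVK // /pr -hc' -scalemxAl /vR RRv scalerA mulVf // scale1r.
      apply: (norm_uniq _ nn ev).
      by have := vQ; rewrite QinE => /andP[].
    have nX : n \in X :&: X2.
      have nQ : n \in Q0 F by rewrite QinE nn /n QZ /pr QR Qp mulr0 eqxx.
      have sp : (p <= phi1)%MS by move: pX1; rewrite X1E inE => /andP[_ ->].
      have sn : (n *m R <= phi1)%MS by rewrite /n -scalemxAl /pr RRv scalemx_sub.
      have gn : dot g2 n = 0.
        by rewrite /n dotZr /pr RE dotBr dotZr g2W mulr0 subr0 g2p mulr0.
      by rewrite inE inE nQ subR sn hX2 nQ gn eqxx.
    rewrite /tangent; have -> : X :&: X2 = [set n]; last by rewrite cards1.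
    apply/setP => v; rewrite in_set1; apply/idP/eqP => [/Xn //|->]; exact: nX.
move=> Y [ovY xY tY1 tY2].
have [hY [hY0 hYc FY]] := ovoid_ovo h2 ovY.
have [r hr] : exists r, X1 :&: Y = [set r].
  by apply/cards1P; rewrite setIC tY1.
have [r' hr'] : exists r, X2 :&: Y = [set r].
  by apply/cards1P; rewrite setIC tY2.
have [k [kn hk]] := tangent_rel h2 h10 hX1 hY0 hYc hr.
have [k' [kn' hk']] := tangent_rel h2 g20 hX2 hY0 hYc hr'.
have [m [mn hm]] := tangent_rel h2 h10 hX1 g20 hX2 hp.
have : r \in X1 :&: Y by rewrite hr set11.
rewrite inE => /andP[rX1 _].
have : r' \in X1 :&: Y -> True by [].
move=> _.
have : r' \in X2 :&: Y by rewrite hr' set11.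
rewrite inE => /andP[r'X2 _].
have := r'X2; rewrite hX2 QinE => /andP[/andP[_ /eqP Qr'] /eqP g2r'].
have hYx : dot hY x = 0 by move: xY; rewrite hYc => /andP[_ /eqP].
have rx : r = x.
  apply: F1 => //.
  move: hYx; rewrite hk h1x add0r => /eqP; rewrite mulf_eq0 (negbTE kn) /= => /eqP.
  done.
subst r.
have hz : forall v, Bq (k *: x - m *: p - k' *: r') v = 0.
  move=> v; rewrite !BqBl !BqZl.
  have := hk v; rewrite hk' hm => e.
  have : k * Bq x v = m * Bq p v + k' * Bq r' v.
    by apply: (addrI (dot h1 v)); rewrite -e addrA.
  by move=> ->; apply: subABAB.
set z := k *: x - m *: p - k' *: r'.
have [z1 z2 z3 z4] := Bq_kill hz.
have Qz : Qform z = crd z 0 ^+ 2 by rewrite /Qform z1 z2 z3 z4; ring.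
have dz : dot g2 z = crd z 0.
  by rewrite dot_crd g20 z1 z2 z3 z4; ring.
have tE : t = m * Bq p x by rewrite /t hm h1x add0r.
have dz' : dot g2 z = k * t.
  by rewrite /z !dotBr !dotZr g2p g2r' !mulr0 !subr0.
have ep := hz p; have ex := hz x.
rewrite /z !BqBl !BqZl Bqvv // in ep ex.
have ep' : k * Bq x p - k' * Bq r' p = 0.
  exact: L1 ep.
have ex' : m * Bq p x + k' * Bq r' x = 0.
  by move: ex; rewrite (Bqvv h2 x); apply: L2.
have Qz' := Qz_lemma h2 Qx Qp Qr' ep' ex'.
rewrite -/z -tE Qz -dz dz' in Qz'.
have kt : k * t = 1 by apply: sq_id => //; rewrite mulf_neq0.
have kE : k = t^-1 by rewrite -[k]mulr1 -(mulfV tn) mulrA kt mul1r.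
apply/setP => v; rewrite memX hYc hXE hk kE.
done.
Qed.
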